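(* Let $G$ be a simple connected graph with vertices $v_1,\dots,v_n$ and edges $e_1,\dots,e_q$, with reduced incidence matrix $A(G)=[x_{ij}]$. For a set $S=\{t_1<t_2<\dots<t_{n-1}\}\subseteq\{1,\dots,q\}$, the edges $\{e_{t_1},\dots,e_{t_{n-1}}\}$ form a spanning tree of $G$ if and only if there is exactly one nonzero monomial of $A(G)$ with content $S$. Consequently, sending $S$ to the edge set $\{e_t : t\in S\}$ gives a one-to-one correspondence between the contents of uniquely occurring nonzero monomials of $A(G)$ and the (labeled) spanning trees of $G$.
   Context: The reduced incidence matrix $A(G)$ is the $(n-1)\times q$ matrix with $x_{ij}=1$ if $v_i$ is an endpoint of $e_j$ and $x_{ij}=0$ otherwise ($1\le i\le n-1$; the row of $v_n$ is deleted). A nonzero monomial of $A(G)$ is a product $x_{1j_1}x_{2j_2}\cdots x_{(n-1)j_{n-1}}$ with $j_1,\dots,j_{n-1}$ pairwise distinct column indices and every factor equal to $1$; its content (second index set) is $\{j_1,\dots,j_{n-1}\}$. A nonzero monomial is uniquely occurring if no other nonzero monomial has the same content. *)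

(* Defs.v *)
From mathcomp Require Import all_boot all_algebra.
Set Implicit Arguments. Unset Strict Implicit. Unset Printing Implicit Defensive.

(* A graph with n.+1 vertices v_1..v_{n+1} (type 'I_n.+1) and q edges
   e_1..e_q (type 'I_q); edge j has endpoints (ends j).1 and (ends j).2.
   The deleted row of the reduced incidence matrix is the last vertex
   (ord_max); row i : 'I_n corresponds to vertex widen_ord _ i. *)
Section Graph.
Variables (n q : nat) (ends : 'I_q -> 'I_n.+1 * 'I_n.+1).

Definition endpoint (v : 'I_n.+1) (j : 'I_q) : bool :=
  (v == (ends j).1) || (v == (ends j).2).

Definition edge_set (j : 'I_q) : {set 'I_n.+1} := [set (ends j).1; (ends j).2].

Definition simple_graph : Prop :=
  (forall j, (ends j).1 != (ends j).2) /\ injective edge_set.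

Definition adj (T : {set 'I_q}) : rel 'I_n.+1 :=
  fun u v => [exists j in T, edge_set j == [set u; v]] && (u != v).

Definition connected_sub (T : {set 'I_q}) : Prop :=
  forall u v, connect (adj T) u v.

Definition has_cycle (T : {set 'I_q}) : Prop :=
  exists c : seq 'I_n.+1, [/\ 3 <= size c, uniq c & cycle (adj T) c].

Definition spanning_tree (T : {set 'I_q}) : Prop :=
  connected_sub T /\ ~ has_cycle T.

Definition connected_graph : Prop := connected_sub setT.

Definition red_inc : 'M[nat]_(n, q) :=
  \matrix_(i < n, j < q) (endpoint (widen_ord (leqnSn n) i) j : nat).

(* nonzero monomial x_{1 f(1)} ... x_{n f(n)}: distinct column indices and
   every factor equal to 1 *)
Definition nz_monomial (f : {ffun 'I_n -> 'I_q}) : bool :=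
  injectiveb f && [forall i, red_inc i (f i) == 1%N].

Definition content (f : {ffun 'I_n -> 'I_q}) : {set 'I_q} := f @: 'I_n.

Definition uniquely_occurring (f : {ffun 'I_n -> 'I_q}) : Prop :=
  nz_monomial f /\
  forall g, nz_monomial g -> content g = content f -> g = f.

End Graph.

(* Main.v *)
Require Import Defs.
From mathcomp Require Import all_boot all_algebra.
Set Implicit Arguments. Unset Strict Implicit. Unset Printing Implicit Defensive.

Lemma fun_cycle (T : finType) (h : T -> T) (P : pred T) x0 :
  x0 \in P -> (forall x, x \in P -> h x \in P) ->
  (forall x, x \in P -> h x != x) -> (forall x, x \in P -> h (h x) != x) ->
  exists c : seq T, [/\ 3 <= size c, uniq c, cycle (frel h) c & {subset c <= P}].
Proof.
move=> P0 hP h1 h2.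
have iP k : iter k h x0 \in P by elim: k => //= k IH; apply: hP.
have ex : exists m, looping h x0 m by exists (order h x0); exact: looping_order.
case: (ex_minnP ex) => m Hm Hmin.
case: m Hm Hmin => [|m'] Hm Hmin; first by [].
have U : uniq (traject h x0 m'.+1).
  rewrite looping_uniq; apply/negP => /Hmin; by rewrite ltnn.
case/trajectP: Hm => i lti E.
pose y := iter i h x0.
have Hk : m'.+1 = i + (m'.+1 - i) by rewrite subnKC // ltnW.
set k := m'.+1 - i in Hk.
have yk : iter k h y = y by rewrite /y -iterD addnC -Hk.
have k0 : 0 < k by rewrite subn_gt0.
exists (traject h y k); split.
- rewrite size_traject.
  case: k k0 yk {Hk} => [|[|[|k]]] // _ yk.
  + by move: (h1 y (iP i)); rewrite /= in yk; rewrite yk eqxx.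
  + by move: (h2 y (iP i)); rewrite /= in yk; rewrite yk eqxx.
- by move: U; rewrite Hk trajectD cat_uniq => /and3P[].
- case: k k0 yk {Hk} => [|k] // _ yk.
  rewrite /= -[in X in rcons _ X]yk iterSr -trajectSr; exact: fpath_traject.
- move=> z /trajectP [j _ ->]; rewrite /y -iterD; exact: iP.
Qed.
Section Aux.
Variables (n q : nat) (ends : 'I_q -> 'I_n.+1 * 'I_n.+1).
Hypothesis simp : simple_graph ends.

Definition Wd (i : 'I_n) : 'I_n.+1 := widen_ord (leqnSn n) i.
Definition root : 'I_n.+1 := ord_max.
Definition other (j : 'I_q) (v : 'I_n.+1) : 'I_n.+1 :=
  if v == (ends j).1 then (ends j).2 else (ends j).1.
Definition Ptr (f : {ffun 'I_n -> 'I_q}) (x : 'I_n) : 'I_n :=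
  insubd x (val (other (f x) (Wd x))).

Lemma Wd_inj : injective Wd.
Proof. by move=> i j /(congr1 val) /= /val_inj. Qed.

Lemma Wd_root i : Wd i != root.
Proof. by rewrite -(inj_eq val_inj) /= neq_ltn ltn_ord. Qed.

Lemma EP v j : endpoint ends v j = (v \in edge_set ends j).
Proof. by rewrite /endpoint /edge_set !inE. Qed.

Lemma other_ep v j : endpoint ends v j -> endpoint ends (other j v) j.
Proof. by rewrite /endpoint /other; case: ifP => _ _; rewrite eqxx ?orbT. Qed.

Lemma other_neq v j : endpoint ends v j -> other j v != v.
Proof.
case: simp => /(_ j) H _; rewrite /endpoint /other.
case/orP=> /eqP ->; first by rewrite eqxx eq_sym.
case: ifP => [/eqP E|_]; last exact: H.
by rewrite -E eqxx in H.
Qed.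

Lemma ep_set v w j : endpoint ends v j -> endpoint ends w j -> v != w ->
  edge_set ends j = [set v; w].
Proof.
rewrite /edge_set /endpoint.
case/orP=> /eqP-> /orP[] /eqP->; rewrite ?eqxx // => _; exact: setUC.
Qed.

Lemma other_eq v w j : endpoint ends v j -> endpoint ends w j -> v != w ->
  other j v = w.
Proof.
rewrite /other /endpoint.
case/orP=> /eqP-> /orP[] /eqP-> ; rewrite ?eqxx //.
by rewrite eq_sym => /negbTE ->.
Qed.

Lemma set2_eq (u v a b : 'I_n.+1) : u != v -> [set u; v] = [set a; b] ->
  (u == a) && (v == b) || (u == b) && (v == a).
Proof.
move=> nuv E.
have : u \in [set a; b] by rewrite -E !inE eqxx.
have : v \in [set a; b] by rewrite -E !inE eqxx orbT.
rewrite !inE.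
by case/orP=> /eqP Hv; case/orP=> /eqP Hu; subst; rewrite ?eqxx ?orbT //; move: nuv; rewrite eqxx.
Qed.

Lemma Ptr_val (f : {ffun 'I_n -> 'I_q}) x : other (f x) (Wd x) != root -> Wd (Ptr f x) = other (f x) (Wd x).
Proof.
move=> H; apply: val_inj; rewrite /= val_insubd.
have : val (other (f x) (Wd x)) < n.
  by move: H; rewrite -(inj_eq val_inj) /= => H; rewrite ltn_neqAle H -ltnS ltn_ord.
by move=> ->.
Qed.

Lemma Ptr_root (f : {ffun 'I_n -> 'I_q}) x : other (f x) (Wd x) = root -> Ptr f x = x.
Proof. by move=> H; apply: val_inj; rewrite /= val_insubd H /= ltnn. Qed.

Lemma adj_sym T : symmetric (adj ends T).
Proof. by move=> u v; rewrite /adj setUC eq_sym. Qed.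


Definition inc (f : {ffun 'I_n -> 'I_q}) := forall i, endpoint ends (Wd i) (f i).

Lemma no2 (f : {ffun 'I_n -> 'I_q}) x y : injective f -> inc f ->
  Wd y = other (f x) (Wd x) -> Wd x = other (f y) (Wd y) -> False.
Proof.
move=> fi fc Ey Ex.
have nxy : Wd x != Wd y by rewrite Ey eq_sym other_neq.
have e1 : edge_set ends (f x) = [set Wd x; Wd y].
  by apply: ep_set => //; rewrite Ey other_ep.
have e2 : edge_set ends (f y) = [set Wd x; Wd y].
  by apply: ep_set; rewrite // Ex other_ep.
case: simp => _ si.
have := si _ _ (etrans e1 (esym e2)) => /fi exy.
by move: nxy; rewrite exy eqxx.
Qed.

Lemma adj_other (f : {ffun 'I_n -> 'I_q}) (T : {set 'I_q}) x : inc f -> f x \in T ->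
  adj ends T (Wd x) (other (f x) (Wd x)).
Proof.
move=> fc fT.
rewrite /adj; apply/andP; split; last by rewrite eq_sym other_neq.
apply/existsP; exists (f x); rewrite fT /=.
by rewrite (ep_set (fc x) (other_ep (fc x))) // eq_sym other_neq.
Qed.

Lemma Ptr_adj (f : {ffun 'I_n -> 'I_q}) (T : {set 'I_q}) x : inc f -> f x \in T ->
  Ptr f x != x -> adj ends T (Wd x) (Wd (Ptr f x)).
Proof.
move=> fc fT nP.
have nr : other (f x) (Wd x) != root.
  by apply/negP => /eqP /Ptr_root E; rewrite E eqxx in nP.
rewrite Ptr_val //; exact: adj_other.
Qed.

Lemma CH (f : {ffun 'I_n -> 'I_q}) (T : {set 'I_q}) c : inc f -> (forall i, f i \in T) ->
  3 <= size c -> uniq c -> cycle (frel (Ptr f)) c -> {in c, forall x, Ptr f x != x} ->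
  has_cycle ends T.
Proof.
move=> fc fT sc uc cc nP.
exists (map Wd c); split; first by rewrite size_map.
  by rewrite map_inj_uniq //; exact: Wd_inj.
rewrite cycle_map; apply: (sub_in_cycle (P := mem c)) cc; last by apply/allP.
move=> x y xc yc /= /eqP <-; apply: Ptr_adj => //; exact: nP.
Qed.

Lemma lemB (f : {ffun 'I_n -> 'I_q}) (T : {set 'I_q}) : injective f -> inc f ->
  (forall i, f i \in T) ->
  (forall i, connect (adj ends T) (Wd i) root) \/
  exists c, [/\ 3 <= size c, uniq c, cycle (frel (Ptr f)) c & {in c, forall x, Ptr f x != x}].
Proof.
move=> fi fc fT.
case: (boolP [forall i, connect (adj ends T) (Wd i) root]) => [/forallP H|]; first by left.
rewrite negb_forall => /existsP [x0 Hx0]; right.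
pose P := [pred i | ~~ connect (adj ends T) (Wd i) root].
have key x : x \in P -> other (f x) (Wd x) != root.
  rewrite inE => Hx; apply/negP => /eqP E; move/negP: Hx; apply.
  by apply: connect1; rewrite -E; apply: adj_other.
have PW x : x \in P -> Wd (Ptr f x) = other (f x) (Wd x) by move/key/Ptr_val.
have nP x : x \in P -> Ptr f x != x.
  move=> /PW E; apply/negP => /eqP E2; move: E; rewrite E2 => E.
  by move: (other_neq (fc x)); rewrite -E eqxx.
have cl x : x \in P -> Ptr f x \in P.
  move=> xP; move: (xP); rewrite !inE; apply: contra => C.
  by apply: connect_trans C; apply: connect1; rewrite PW //; apply: adj_other.
have h2 x : x \in P -> Ptr f (Ptr f x) != x.
  move=> xP; apply/negP => /eqP E.
  apply: (no2 (x := x) (y := Ptr f x) fi fc); first by rewrite PW.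
  by rewrite -{1}E PW // cl.
have [c [c1 c2 c3 c4]] := fun_cycle (P := P) (h := Ptr f) Hx0 cl nP h2.
exists c; split => // x /c4; exact: nP.
Qed.

Lemma lemU (f g : {ffun 'I_n -> 'I_q}) (S : {set 'I_q}) :
  injective f -> injective g -> inc f -> inc g -> (forall i, f i \in S) ->
  content f = content g -> ~ has_cycle ends S -> f = g.
Proof.
move=> fi gi fc gc fS cfg nc.
case: (boolP [forall i, f i == g i]) => [/forallP H|]; first by apply/ffunP => i; apply/eqP.
rewrite negb_forall => /existsP [x0 Hx0]; exfalso.
pose P := [pred i | f i != g i].
have PE x : x \in P -> [/\ g (Ptr f x) = f x, Ptr f x != x &
                            Wd (Ptr f x) = other (f x) (Wd x)].
  move=> xP.
  have : f x \in content g by rewrite -cfg; apply: imset_f.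
  case/imsetP => j _ Ej.
  have njx : j != x by apply: contraTneq xP => E; rewrite inE negbK Ej E.
  have Ho : other (f x) (Wd x) = Wd j.
    apply: other_eq; first exact: fc.
      by rewrite Ej; exact: gc.
    by rewrite (inj_eq Wd_inj) eq_sym.
  have Hr : other (f x) (Wd x) != root by rewrite Ho Wd_root.
  have Pj : Ptr f x = j by apply: Wd_inj; rewrite Ptr_val // Ho.
  by rewrite Pj Ho; split.
have cl x : x \in P -> Ptr f x \in P.
  move=> /PE [E1 E2 _]; rewrite inE E1 (inj_eq fi) //.
have nP x : x \in P -> Ptr f x != x by case/PE.
have h2 x : x \in P -> Ptr f (Ptr f x) != x.
  move=> xP; apply/negP => /eqP E.
  apply: (no2 (x := x) (y := Ptr f x) fi fc); first by case/PE: xP.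
  by rewrite -{1}E; case/PE: (cl _ xP).
have [c [c1 c2 c3 c4]] := fun_cycle (P := P) (h := Ptr f) Hx0 cl nP h2.
apply: nc; apply: (CH (f := f)) c3 _ => // x /c4; exact: nP.
Qed.

Lemma lemA (f : {ffun 'I_n -> 'I_q}) c : injective f -> inc f ->
  0 < size c -> uniq c -> cycle (frel (Ptr f)) c -> {in c, forall x, Ptr f x != x} ->
  exists g, [/\ g != f, injective g, inc g & content g = content f].
Proof.
move=> fi fc sc uc cc nP.
pose pi v := if v \in c then prev c v else v.
have pii : injective pi.
  move=> u v; rewrite /pi.
  case: (boolP (u \in c)) => uc'; case: (boolP (v \in c)) => vc' //.
  - exact: (can_inj (next_prev uc)).
  - by move=> E; move: vc'; rewrite -E mem_prev uc'.
  - by move=> E; move: uc'; rewrite E mem_prev vc'.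
have Pn y : y \in c -> Ptr f y = next c y by move=> yc; apply/eqP; exact: next_cycle cc yc.
exists [ffun v => f (pi v)]; split.
- have [x xc] : exists x, x \in c.
    by move: sc; case: c {pii pi Pn nP cc uc} => [|x s] // _; exists x; exact: mem_head.
  apply/negP => /eqP /ffunP /(_ x); rewrite ffunE /pi xc => /fi E.
  have := nP x xc; rewrite Pn //.
  by rewrite -{1}E next_prev // eqxx.
- by move=> u v; rewrite !ffunE => /fi /pii.
- move=> v; rewrite ffunE /pi; case: ifP => vc; last exact: fc.
  set y := prev c v.
  have yc : y \in c by rewrite mem_prev.
  have Ey : Ptr f y = v by rewrite Pn // next_prev.
  have nr : other (f y) (Wd y) != root.
    by apply/negP => /eqP /Ptr_root E; move: (nP y yc); rewrite E eqxx.
  by rewrite -Ey Ptr_val //; apply: other_ep.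
- have [pinv K1 K2] := injF_bij pii.
  apply/setP => e; apply/imsetP/imsetP => [[x _ ->]|[x _ ->]].
    by exists (pi x) => //; rewrite ffunE.
  by exists (pinv x) => //; rewrite ffunE K2.
Qed.

Lemma lem1 (T : {set 'I_q}) : connected_sub ends T ->
  exists f : {ffun 'I_n -> 'I_q}, [/\ injective f, inc f & forall i, f i \in T].
Proof.
move=> conn.
pose Pk v k := [exists t : k.-tuple 'I_n.+1, path (adj ends T) v t && (last v t == root)].
have hex v : exists k, Pk v k.
  case/connectP: (conn v root) => p pp lp; exists (size p); apply/existsP.
  by exists (in_tuple p); rewrite /= pp -lp eqxx.
pose d v := ex_minn (hex v).
have step i : exists j, [/\ j \in T, endpoint ends (Wd i) j &
    exists w, edge_set ends j = [set Wd i; w] /\ d w < d (Wd i)].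
  rewrite /d; case: (ex_minnP (hex (Wd i))) => k /existsP [t /andP [pt lt]] _.
  case: t pt lt => [[|w s] Hs] /= pt lt.
    by move: lt; rewrite (negbTE (Wd_root i)).
  case/andP: pt => /andP [/existsP [j /andP [jT /eqP ej]] nw] ps.
  exists j; split => //; first by rewrite EP ej !inE eqxx.
  exists w; split => //.
  case: (ex_minnP (hex w)) => m _ Hm.
  have : Pk w (size s) by apply/existsP; exists (in_tuple s); rewrite /= ps lt.
  move/Hm; move/eqP: Hs => <-; by [].
have [F HF] := fin_all_exists step.
exists [ffun i => F i]; split.
- move=> x y; rewrite !ffunE => E.
  case: (HF x) => _ _ [w1 [e1 d1]]; case: (HF y) => _ _ [w2 [e2 d2]].
  apply/eqP; apply: contraT => nxy.
  rewrite E e2 in e1.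
  have nw : Wd y != w2 by apply: contraTneq d2 => <-; rewrite ltnn.
  case/orP: (set2_eq nw e1) => /andP [/eqP h1 /eqP h2].
    by move: nxy; rewrite -(inj_eq Wd_inj) h1 eqxx.
  by move: d1 d2; rewrite -h1 h2 => d1 d2; move: (ltn_trans d1 d2); rewrite ltnn.
- by move=> i; rewrite ffunE; case: (HF i).
- by move=> i; rewrite ffunE; case: (HF i).
Qed.

Lemma adj_sub (T S : {set 'I_q}) : T \subset S -> subrel (adj ends T) (adj ends S).
Proof.
move=> TS u v /andP [/existsP [j /andP [jT ej]] nuv].
by apply/andP; split => //; apply/existsP; exists j; rewrite (subsetP TS).
Qed.

Lemma lem3 (T S : {set 'I_q}) e : T \subset S -> e \in S -> e \notin T ->
  connected_sub ends T -> has_cycle ends S.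
Proof.
move=> TS eS eT conn.
have nab : (ends e).1 != (ends e).2 by case: simp.
set a := (ends e).1 in nab *; set b := (ends e).2 in nab *.
case/connectP: (conn b a) => p pp.
case: (shortenP pp) => p' pp' up' _ la.
exists (b :: p'); split => //.
- case: p' pp' up' la => [|x [|y s]] //=.
    by move=> _ _ E; move: nab; rewrite E eqxx.
  rewrite andbT => /andP [/existsP [j /andP [jT /eqP ej]] _] _ E.
  case: simp => _ si.
  have : j = e by apply: si; rewrite ej /edge_set -/a -/b E setUC.
  by move=> E2; move: eT; rewrite -E2 jT.
- rewrite /= rcons_path (sub_path (adj_sub TS) pp') -la /=.
  rewrite /adj /= nab andbT; apply/existsP; exists e; rewrite eS /=.
  by rewrite /edge_set.
Qed.

Lemma lemR (S : {set 'I_q}) : connected_sub ends S -> has_cycle ends S ->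
  exists2 e, e \in S & connected_sub ends (S :\ e).
Proof.
move=> conn [[|c0 [|c1 [|c2 p]]] [//= _ uc cc]].
set p' := c2 :: p.
move: cc; rewrite /= => /andP [/andP [/existsP [e /andP [eS /eqP ee]] n01] cp].
exists e => //.
have key x y : adj ends S x y -> ~~ ((x == c0) && (y == c1) || (x == c1) && (y == c0)) ->
    adj ends (S :\ e) x y.
  case/andP => /existsP [j /andP [jS /eqP ej]] nxy np.
  rewrite /adj /= nxy andbT; apply/existsP; exists j; rewrite !inE jS ej eqxx !andbT.
  apply/eqP => E; move: np; rewrite E ee in ej.
  by rewrite (set2_eq nxy (esym ej)).
have PL x s : c0 \notin x :: s -> c1 \notin s -> (s == [::]) ==> (x != c1) ->
    path (adj ends S) x (rcons s c0) -> path (adj ends (S :\ e)) x (rcons s c0).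
  elim: s x => [|y s IH] x /=.
    rewrite !inE andbT => n0 _ n1; rewrite !andbT => H; apply: key => //.
    by rewrite eq_sym in n0; rewrite (negbTE n0) (negbTE n1).
  move=> H0 H1 _ /andP [axy ps].
  move: H0 H1; rewrite !inE !negb_or => /andP [n0x /andP [n0y n0s]] /andP [n1y n1s].
  rewrite key //; last first.
    move: n0x n0y; rewrite ![c0 == _]eq_sym => /negbTE -> /negbTE ->.
    by rewrite !andbF.
  apply: IH => //; first by rewrite inE negb_or n0y.
  by rewrite eq_sym in n1y; rewrite n1y implybT.
have c10 : connect (adj ends (S :\ e)) c1 c0.
  apply/connectP; exists (rcons p' c0); last by rewrite last_rcons.
  apply: PL => //.
  - by case/andP: uc.
  - by case/and3P: uc.
move=> u v; apply: (connect_sub (e := adj ends S)); last exact: conn.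
move=> x y axy.
case: (boolP ((x == c0) && (y == c1) || (x == c1) && (y == c0))) => [|np].
  case/orP => /andP [/eqP -> /eqP ->] //.
  by rewrite (sym_connect_sym (adj_sym (S :\ e))).
exact/connect1/key.
Qed.

Lemma nzmE f : nz_monomial ends f <-> injective f /\ inc f.
Proof.
rewrite /nz_monomial; split.
  case/andP => /injectiveP fi /forallP H; split => // i.
  by move: (H i); rewrite /red_inc mxE; case: endpoint.
case => fi fc; apply/andP; split; first exact/injectiveP.
by apply/forallP => i; rewrite /red_inc mxE; move: (fc i); rewrite /Wd => ->.
Qed.

Lemma nonroot v : v != root -> exists i, v = Wd i.
Proof.
move=> H; have lt : val v < n.
  by move: H; rewrite -(inj_eq val_inj) /= => H; rewrite ltn_neqAle H -ltnS ltn_ord.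
by exists (Ordinal lt); apply: val_inj.
Qed.

Lemma conn_root (T : {set 'I_q}) : (forall i, connect (adj ends T) (Wd i) root) ->
  connected_sub ends T.
Proof.
move=> H.
have Hv v : connect (adj ends T) v root.
  case: (boolP (v == root)) => [/eqP ->|/nonroot [i ->]] //; exact: connect0.
move=> u v; apply: connect_trans (Hv u) _.
by rewrite (sym_connect_sym (adj_sym T)).
Qed.

Lemma cycle_mono (T S : {set 'I_q}) : T \subset S -> has_cycle ends T -> has_cycle ends S.
Proof.
move=> TS [c [c1 c2 c3]]; exists c; split => //; exact: sub_cycle (adj_sub TS) _ c3.
Qed.

Lemma card_content (f : {ffun 'I_n -> 'I_q}) : injective f -> #|content f| = n.
Proof. by move=> fi; rewrite /content card_imset // card_ord. Qed.

Lemma content_sub (f : {ffun 'I_n -> 'I_q}) (S : {set 'I_q}) :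
  (forall i, f i \in S) -> content f \subset S.
Proof. by move=> H; apply/subsetP => x /imsetP [i _ ->]. Qed.

End Aux.


Unset Implicit Arguments.
Theorem theorem2p2 (n q : nat) (ends : 'I_q -> 'I_n.+1 * 'I_n.+1) :
  simple_graph ends -> connected_graph ends ->
  (forall S : {set 'I_q}, #|S| = n ->
     (spanning_tree ends S <->
      #|[set f : {ffun 'I_n -> 'I_q} | nz_monomial ends f && (content f == S)]| = 1%N))
  /\
  (forall S : {set 'I_q},
     (exists f, uniquely_occurring ends f /\ content f = S) <-> spanning_tree ends S).
Proof.
move=> simp gconn.
have key1 (S : {set 'I_q}) : #|S| = n -> spanning_tree ends S ->
    exists f : {ffun 'I_n -> 'I_q}, [/\ injective f, inc ends f & content f = S].
  move=> HS [cS _]; have [f [fi fc fS]] := lem1 cS.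
  exists f; split => //; apply/eqP; by rewrite eqEcard (content_sub fS) card_content // HS leqnn.
have uq : forall (S0 : {set 'I_q}) (f g : {ffun 'I_n -> 'I_q}), ~ has_cycle ends S0 ->
    injective f -> inc ends f -> content f = S0 ->
    injective g -> inc ends g -> content g = S0 -> f = g.
  move=> S0 f g nc fi fc cf gi gc cg; apply: (lemU simp fi gi fc gc _ _ nc).
    by move=> i; rewrite -cf; apply: imset_f.
  by rewrite cf cg.
have P1 (S : {set 'I_q}) : #|S| = n -> (spanning_tree ends S <->
      #|[set f : {ffun 'I_n -> 'I_q} | nz_monomial ends f && (content f == S)]| = 1%N).
  move=> HS; split.
    move=> st; have [f [fi fc cf]] := key1 S HS st.
    apply/eqP/cards1P; exists f; apply/setP => g; rewrite !inE.
    apply/idP/idP.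
      case/andP => /nzmE [gi gc] /eqP cg; apply/eqP.
      exact: (uq S g f st.2 gi gc cg fi fc cf).
    by move/eqP ->; rewrite cf eqxx andbT; apply/nzmE.
  move/eqP/cards1P => [f Ef].
  have : f \in [set f0 : {ffun 'I_n -> 'I_q} | nz_monomial ends f0 && (content f0 == S)].
    by rewrite Ef set11.
  rewrite inE => /andP [/nzmE [fi fc] /eqP cf].
  have uniqf (g : {ffun 'I_n -> 'I_q}) : injective g -> inc ends g -> content g = S -> g = f.
    move=> gi gc cg; apply/set1P; rewrite -Ef inE cg eqxx andbT; exact/nzmE.
  have fS i : f i \in S by rewrite -cf; apply: imset_f.
  have cS : connected_sub ends S.
    case: (lemB simp fi fc fS) => [H|[c [c1 c2 c3 c4]]]; first exact: conn_root.
    have := lemB simp fi fc fS; case => [H|[cy [hc1 hc2 hc3 hc4]]]; first exact: conn_root.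
    have [g [gf gi gc cg]] := lemA fi fc (leq_trans (isT : 0 < 3) hc1) hc2 hc3 hc4.
    by rewrite (uniqf g gi gc (etrans cg cf)) eqxx in gf.
  split => // hc.
  have [e eS cS'] := lemR cS hc.
  have [f' [fi' _ fS']] := lem1 cS'.
  have := subset_leq_card (content_sub fS').
  have HS' := cardsD1 e S; rewrite eS HS add1n in HS'.
  by rewrite card_content // HS' ltnn.
split => // S; split.
  case=> f [[nzf Uf] cf]; have [fi fc] := (nzmE _ f).1 nzf.
  have HS : #|S| = n by rewrite -cf card_content.
  apply/(P1 S HS); apply/eqP/cards1P; exists f; apply/setP => g; rewrite !inE.
  apply/idP/idP.
    by case/andP => ng /eqP cg; apply/eqP; apply: Uf => //; rewrite cg cf.
  by move/eqP ->; rewrite nzf cf eqxx.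
move=> st.
have HS : #|S| = n.
  have [f [fi fc fS]] := lem1 st.1.
  have cC : connected_sub ends (content f).
    have fC i : f i \in content f by apply: imset_f.
    case: (lemB simp fi fc fC) => [H|[cy [h1 h2 h3 h4]]]; first exact: conn_root.
    exfalso; apply: st.2; apply: cycle_mono (content_sub fS) _.
    by have := CH simp fc fC h1 h2 h3 h4.
  case: (boolP (S \subset content f)) => [sub | /subsetPn [e eS eC]].
    apply/eqP; rewrite eqn_leq.
    have := subset_leq_card sub; have := subset_leq_card (content_sub fS).
    by rewrite card_content // => -> ->.
  by exfalso; apply: st.2; have := lem3 simp (content_sub fS) eS eC cC.
have [f [fi fc cf]] := key1 S HS st.
exists f; split => //; split; first exact/nzmE.
move=> g /nzmE [gi gc] cg; exact: (uq S g f st.2 gi gc (etrans cg cf) fi fc cf).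
Qed.
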